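(* Let $F_1,F_2$ be Minkowski norms on $\mathbb{R}^3$ invariant under the matrices $\mathrm{diag}(1,A)$, $A\in O(2)$, and write $\tfrac12F_1^2=r^2f(t)$, $\tfrac12F_2^2=r^2h(\theta)$ in spherical coordinates. Let $t'$ be the unique solution in $(0,\pi)$ of $\sin t\,f'(t)-2\cos t\,f(t)=0$. Let $y\in S_{F_1}$ have spherical coordinates $(f(t_0)^{-1/2},t_0,0)$ with $t_0\in(0,\pi)\setminus\{\pi/2,t'\}$ and $-\cos t_0\sin t_0\,f''(t_0)+(\cos^2t_0-\sin^2t_0)f'(t_0)\ne0$. Let $\Phi$ be a local Hessian isometry from $F_1$ to $F_2$ defined on an $SO(2)$-invariant conic neighborhood of $y$, of the form $(r,t,\phi)\mapsto\big(f(t)^{1/2}h(\theta(t))^{-1/2}r,\theta(t),\phi\big)$ with $\theta$ smooth, $\theta'\neq 0$. Then exactly one of the following holds for all $t$ sufficiently close to $t_0$: (1) $\theta'(t)=\dfrac{\cos\theta(t)\sin\theta(t)}{\cos t\sin t}$; (2) $\theta'(t)=\dfrac{\big(-2f(t)f''(t)+f'(t)^2-4f(t)^2\big)\cos\theta(t)\sin\theta(t)}{\big(\cos t\,f'(t)+2\sin t\,f(t)\big)\big(\sin t\,f'(t)-2\cos t\,f(t)\big)}$.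
   Context: A Minkowski norm on $\mathbb{R}^3$ is a continuous function $F\ge0$, smooth and positive on $\mathbb{R}^3\setminus\{0\}$, positively $1$-homogeneous, with positive definite Hessian of $E=\tfrac12F^2$ on $\mathbb{R}^3\setminus\{0\}$; its Hessian metric is $g=\mathrm{d}^2E$, its indicatrix $S_F=\{F=1\}$. Spherical coordinates $(r,\theta,\phi)\in\mathbb{R}_{>0}\times(0,\pi)\times\mathbb{R}/2\pi\mathbb{Z}$: $x_1=r\cos\theta$, $x_2=r\sin\theta\cos\phi$, $x_3=r\sin\theta\sin\phi$; the letter $t$ is used for the $\theta$-coordinate on the $F_1$ side. The functions $f,h$ are extended to even $2\pi$-periodic smooth positive functions on $\mathbb{R}$. A local Hessian isometry is a positively $1$-homogeneous diffeomorphism between conic open sets pulling back $g_2$ to $g_1$. *)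

(* Defs.v *)
From Stdlib Require Import Reals Lra.
From Coquelicot Require Import Coquelicot.
Open Scope R_scope.

Definition R3 : Type := (R * R * R)%type.
Definition mk3 (a b c : R) : R3 := (a, b, c).
Definition c1 (x : R3) : R := fst (fst x).
Definition c2 (x : R3) : R := snd (fst x).
Definition c3 (x : R3) : R := snd x.
Definition coord (i : nat) (x : R3) : R :=
  match i with 0%nat => c1 x | 1%nat => c2 x | _ => c3 x end.
Definition zero3 : R3 := mk3 0 0 0.
Definition scal3 (l : R) (x : R3) : R3 := mk3 (l * c1 x) (l * c2 x) (l * c3 x).
Definition shift3 (i : nat) (s : R) (x : R3) : R3 :=
  match i with
  | 0%nat => mk3 (c1 x + s) (c2 x) (c3 x)
  | 1%nat => mk3 (c1 x) (c2 x + s) (c3 x)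
  | _ => mk3 (c1 x) (c2 x) (c3 x + s)
  end.

Definition ex_partial (i : nat) (f : R3 -> R) (x : R3) : Prop :=
  ex_derive (fun s => f (shift3 i s x)) 0.
Definition partial (i : nat) (f : R3 -> R) (x : R3) : R :=
  Derive (fun s => f (shift3 i s x)) 0.

Fixpoint Ck (k : nat) (U : R3 -> Prop) (f : R3 -> R) : Prop :=
  match k with
  | 0%nat => forall x, U x -> continuous f x
  | S k' => (forall x, U x -> continuous f x) /\
            forall i, (i < 3)%nat ->
              (forall x, U x -> ex_partial i f x) /\ Ck k' U (partial i f)
  end.
Definition smooth_on (U : R3 -> Prop) (f : R3 -> R) : Prop := forall k, Ck k U f.
Definition smooth_map_on (U : R3 -> Prop) (P : R3 -> R3) : Prop :=
  forall i, (i < 3)%nat -> smooth_on U (fun x => coord i (P x)).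

Definition sum3 (g : nat -> R) : R := g 0%nat + g 1%nat + g 2%nat.

Definition hess (E : R3 -> R) (x u v : R3) : R :=
  sum3 (fun i => sum3 (fun j => partial i (partial j E) x * coord i u * coord j v)).
Definition Efun (F : R3 -> R) (x : R3) : R := / 2 * (F x) ^ 2.
Definition hess_metric (F : R3 -> R) (x u v : R3) : R := hess (Efun F) x u v.

Definition dmap (P : R3 -> R3) (x u : R3) : R3 :=
  let d k := sum3 (fun j => partial j (fun z => coord k (P z)) x * coord j u) in
  mk3 (d 0%nat) (d 1%nat) (d 2%nat).

Definition nonzero3 (x : R3) : Prop := x <> zero3.

Definition minkowski_norm (F : R3 -> R) : Prop :=
  (forall x, continuous F x) /\
  (forall x, 0 <= F x) /\
  smooth_on nonzero3 F /\
  (forall x, nonzero3 x -> 0 < F x) /\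
  (forall l x, 0 < l -> F (scal3 l x) = l * F x) /\
  (forall x u, nonzero3 x -> nonzero3 u -> 0 < hess_metric F x u u).

(** Invariance under diag(1, A), A in O(2) (A = [[a, b], [c, d]], A^T A = I). *)
Definition O2_invariant (F : R3 -> R) : Prop :=
  forall a b c d x1 x2 x3,
    a ^ 2 + c ^ 2 = 1 -> b ^ 2 + d ^ 2 = 1 -> a * b + c * d = 0 ->
    F (mk3 x1 (a * x2 + b * x3) (c * x2 + d * x3)) = F (mk3 x1 x2 x3).

Definition SO2_invariant_set (U : R3 -> Prop) : Prop :=
  forall a x1 x2 x3, U (mk3 x1 x2 x3) ->
    U (mk3 x1 (cos a * x2 - sin a * x3) (sin a * x2 + cos a * x3)).

Definition conic (U : R3 -> Prop) : Prop :=
  (forall x, U x -> nonzero3 x) /\ (forall l x, 0 < l -> U x -> U (scal3 l x)).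

Definition sph (r th ph : R) : R3 :=
  mk3 (r * cos th) (r * sin th * cos ph) (r * sin th * sin ph).

(** The profile function: E(sph r t ph) = r^2 * prof F t (even, 2pi-periodic on R). *)
Definition prof (F : R3 -> R) (t : R) : R := Efun F (sph 1 t 0).

Definition local_hessian_isometry (F1 F2 : R3 -> R) (U : R3 -> Prop) (P : R3 -> R3) : Prop :=
  exists (V : R3 -> Prop) (Q : R3 -> R3),
    open U /\ open V /\ conic U /\ conic V /\
    (forall x, U x -> V (P x)) /\ (forall x, V x -> U (Q x)) /\
    (forall x, U x -> Q (P x) = x) /\ (forall x, V x -> P (Q x) = x) /\
    smooth_map_on U P /\ smooth_map_on V Q /\
    (forall l x, 0 < l -> U x -> P (scal3 l x) = scal3 l (P x)) /\
    (forall x u v, U x ->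
       hess_metric F1 x u v = hess_metric F2 (P x) (dmap P x u) (dmap P x v)).

Definition near_pt (t0 : R) (P : R -> Prop) : Prop :=
  exists eps, 0 < eps /\ forall t, Rabs (t - t0) < eps -> P t.

(* Main.v *)
Require Import Defs.
From Stdlib Require Import Reals Lra Lia.
From Coquelicot Require Import Coquelicot.
Open Scope R_scope.

Lemma scalR (a b : R) : scal a b = a * b.
Proof. reflexivity. Qed.

Lemma shift_is_derive_l (phi : R -> R) z l :
  is_derive (fun s => phi (z + s)) 0 l -> is_derive phi z l.
Proof.
  intro H.
  assert (H2 : is_derive (fun w => (fun s => phi (z + s)) (w - z)) z (scal 1 l)).
  { apply (is_derive_comp (fun s => phi (z + s)) (fun w => w - z)).
    replace (z - z) with 0 by ring. exact H.
    auto_derive; auto; unfold plus, zero, one; simpl; ring. }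
  rewrite scalR, Rmult_1_l in H2.
  eapply is_derive_ext; [|exact H2]. intro t. simpl. f_equal; ring.
Qed.

Lemma shift_is_derive_r (phi : R -> R) z l :
  is_derive phi z l -> is_derive (fun s => phi (z + s)) 0 l.
Proof.
  intro H.
  assert (H2 : is_derive (fun s => phi (z + s)) 0 (scal 1 l)).
  { apply (is_derive_comp phi (fun s => z + s)).
    cbv beta. rewrite Rplus_0_r. exact H.
    auto_derive; auto; unfold plus, zero, one; simpl; ring. }
  rewrite scalR, Rmult_1_l in H2. exact H2.
Qed.

Lemma shift_ex (phi : R -> R) z :
  ex_derive (fun s => phi (z + s)) 0 -> ex_derive phi z.
Proof. intros [l H]. exists l. apply shift_is_derive_l; auto. Qed.

Lemma shift_Derive (phi : R -> R) z :
  ex_derive phi z -> Derive (fun s => phi (z + s)) 0 = Derive phi z.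
Proof.
  intros [l H]. rewrite (is_derive_unique _ _ _ H).
  apply is_derive_unique. apply shift_is_derive_r; auto.
Qed.

Fixpoint pn (n : nat) (F : R3 -> R) : R3 -> R :=
  match n with 0%nat => F | S m => partial 0 (pn m F) end.

Lemma Ck_S_partial k U f i : (i < 3)%nat -> Ck (S k) U f -> Ck k U (partial i f).
Proof. intros Hi [_ H]. apply (H i Hi). Qed.

Lemma Ck_ex k U f i x : (i < 3)%nat -> Ck (S k) U f -> U x -> ex_partial i f x.
Proof. intros Hi [_ H] Hx. apply (H i Hi); auto. Qed.

Lemma smooth_pn U F : smooth_on U F -> forall n k, Ck k U (pn n F).
Proof.
  intros H n; induction n; intro k; simpl. apply H.
  apply Ck_S_partial; [lia| apply IHn].
Qed.

Lemma nz_line z : nonzero3 (mk3 z 1 0).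
Proof. unfold nonzero3, mk3, zero3. intro H. injection H. lra. Qed.

Lemma phi_Dn F : smooth_on nonzero3 F -> forall n z,
  Derive_n (fun w => F (mk3 w 1 0)) n z = pn n F (mk3 z 1 0) /\
  ex_derive (Derive_n (fun w => F (mk3 w 1 0)) n) z.
Proof.
  intros HF n. induction n; intro z.
  - split. reflexivity. simpl.
    apply shift_ex. apply (Ck_ex 0 nonzero3 F 0 (mk3 z 1 0)); [lia| apply HF | apply nz_line].
  - assert (Hext : forall w, Derive_n (fun w => F (mk3 w 1 0)) n w = pn n F (mk3 w 1 0))
      by (intro w; apply IHn).
    assert (Hex : forall w, ex_derive (fun w => pn n F (mk3 w 1 0)) w).
    { intro w. apply shift_ex.
      apply (Ck_ex 0 nonzero3 (pn n F) 0 (mk3 w 1 0)); [lia| apply smooth_pn; auto | apply nz_line]. }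
    assert (Heq : forall w, Derive_n (fun w => F (mk3 w 1 0)) (S n) w = pn (S n) F (mk3 w 1 0)).
    { intro w. simpl Derive_n. rewrite (Derive_ext _ (fun w => pn n F (mk3 w 1 0)) _ Hext).
      simpl pn. change (partial 0 (pn n F) (mk3 w 1 0)) with
        (Derive (fun s => pn n F (mk3 (w + s) 1 0)) 0).
      symmetry. apply (shift_Derive (fun w => pn n F (mk3 w 1 0))). apply Hex. }
    split. apply Heq.
    apply (ex_derive_ext (fun w => pn (S n) F (mk3 w 1 0))).
    intro; symmetry; apply Heq.
    apply shift_ex.
    apply (Ck_ex 0 nonzero3 (pn (S n) F) 0 (mk3 z 1 0)); [lia| apply smooth_pn; auto | apply nz_line].
Qed.

Ltac etaD := repeat match goal with
  | |- context [Derive (fun x : R => ?f x)] => change (fun x : R => f x) with f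
  end.

Definition C3 (g : R -> R) := forall z,
  ex_derive g z /\ ex_derive (Derive g) z /\ ex_derive (Derive (Derive g)) z.

Lemma g_C3 F : smooth_on nonzero3 F -> C3 (fun z => Efun F (mk3 z 1 0)).
Proof.
  intro HF. set (phi := fun w => F (mk3 w 1 0)).
  assert (E0 : forall z, ex_derive phi z) by (intro z; apply (phi_Dn F HF 0 z)).
  assert (E1 : forall z, ex_derive (Derive phi) z) by (intro z; apply (phi_Dn F HF 1 z)).
  assert (E2 : forall z, ex_derive (Derive (Derive phi)) z) by (intro z; apply (phi_Dn F HF 2 z)).
  assert (E3 : forall z, ex_derive (Derive (Derive (Derive phi))) z) by (intro z; apply (phi_Dn F HF 3 z)).
  assert (Hg : forall z, Efun F (mk3 z 1 0) = / 2 * phi z ^ 2) by reflexivity.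
  assert (D1 : forall z, Derive (fun z => Efun F (mk3 z 1 0)) z = phi z * Derive phi z).
  { intro z. rewrite (Derive_ext _ _ _ Hg). apply is_derive_unique. auto_derive. auto. etaD. field. }
  assert (D2 : forall z, Derive (Derive (fun z => Efun F (mk3 z 1 0))) z =
     Derive phi z * Derive phi z + phi z * Derive (Derive phi) z).
  { intro z. rewrite (Derive_ext _ _ _ D1). apply is_derive_unique. auto_derive. auto. etaD. ring. }
  intro z. split; [|split].
  - apply (ex_derive_ext (fun z => / 2 * phi z ^ 2)). intro; symmetry; apply Hg.
    auto_derive. auto.
  - apply (ex_derive_ext (fun z => phi z * Derive phi z)). intro; symmetry; apply D1.
    auto_derive. auto.
  - apply (ex_derive_ext (fun z => Derive phi z * Derive phi z + phi z * Derive (Derive phi) z)).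
    intro; symmetry; apply D2.
    auto_derive. auto.
Qed.
Lemma loc_of (x eps : R) (P : R -> Prop) :
  0 < eps -> (forall y, Rabs (y - x) < eps -> P y) -> locally x P.
Proof. intros He H. exists (mkposreal eps He). intros y Hy. apply H. exact Hy. Qed.

Section Hess.
Variables (E : R3 -> R) (g : R -> R).
Hypothesis HE3 : forall a b c, 0 < b -> E (mk3 a b c) = (b^2 + c^2) * g (a / sqrt (b^2 + c^2)).
Hypothesis Hg : C3 g.
Let g0 z : ex_derive g z := proj1 (Hg z).
Let g1 z : ex_derive (Derive g) z := proj1 (proj2 (Hg z)).

Ltac sc := repeat match goal with |- _ /\ _ => split end; try exact I; try (apply g0); try (apply g1); try lra; try nra.

Lemma Epl a b : 0 < b -> E (mk3 a b 0) = b^2 * g (a / b).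
Proof.
  intro Hb. rewrite HE3 by auto. replace (b^2 + 0^2) with (b^2) by ring.
  rewrite sqrt_pow2 by lra. reflexivity.
Qed.

Lemma PE0 a b : 0 < b -> partial 0 E (mk3 a b 0) = b * Derive g (a / b).
Proof.
  intro Hb. change (partial 0 E (mk3 a b 0)) with (Derive (fun s => E (mk3 (a+s) b 0)) 0).
  rewrite (Derive_ext _ (fun s => b^2 * g ((a+s)/b))) by (intro; apply Epl; auto).
  apply is_derive_unique. auto_derive. apply g0. etaD.
  unfold Rdiv. rewrite Rplus_0_r. field. lra.
Qed.

Lemma PE1 a b : 0 < b -> partial 1 E (mk3 a b 0) = 2 * b * g (a / b) - a * Derive g (a / b).
Proof.
  intro Hb. change (partial 1 E (mk3 a b 0)) with (Derive (fun s => E (mk3 a (b+s) 0)) 0).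
  rewrite (Derive_ext_loc _ (fun s => (b+s)^2 * g (a/(b+s)))).
  2:{ apply (loc_of 0 b); auto. intros y Hy. apply Epl.
      rewrite Rminus_0_r in Hy. apply Rabs_def2 in Hy. lra. }
  apply is_derive_unique. auto_derive. sc. etaD.
  unfold Rdiv. rewrite Rplus_0_r. field. lra.
Qed.

Lemma PE2 a b s : 0 < b -> partial 2 E (mk3 a b s) =
  s * (2 * g (a / sqrt (b^2 + s^2)) - a / sqrt (b^2 + s^2) * Derive g (a / sqrt (b^2 + s^2))).
Proof.
  intro Hb. change (partial 2 E (mk3 a b s)) with (Derive (fun s' => E (mk3 a b (s + s'))) 0).
  rewrite (Derive_ext _ (fun s' => (b^2 + (s+s')^2) * g (a / sqrt (b^2 + (s+s')^2))))
    by (intro; apply HE3; auto).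
  assert (Hq : 0 < b^2 + s^2) by nra.
  apply is_derive_unique. auto_derive.
  { rewrite Rplus_0_r. repeat split; try nra. apply g0. intro Hs.
    apply sqrt_eq_0 in Hs; nra. }
  etaD. rewrite !Rplus_0_r.
  assert (Hr := sqrt_sqrt (b^2 + s^2) (Rlt_le _ _ Hq)).
  assert (Hrp := sqrt_lt_R0 _ Hq).
  set (r := sqrt (b^2+s^2)) in *.
  replace (b * (b * 1) + s * (s * 1)) with (r * r) by (rewrite Hr; ring).
  rewrite sqrt_square by lra. unfold Rdiv. field. lra.
Qed.

Lemma H00 a b : 0 < b -> partial 0 (partial 0 E) (mk3 a b 0) = Derive (Derive g) (a / b).
Proof.
  intro Hb. change (partial 0 (partial 0 E) (mk3 a b 0)) with
    (Derive (fun s => partial 0 E (mk3 (a+s) b 0)) 0).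
  rewrite (Derive_ext _ (fun s => b * Derive g ((a+s)/b))) by (intro; apply PE0; auto).
  apply is_derive_unique. auto_derive. sc. etaD.
  unfold Rdiv. rewrite Rplus_0_r. field. lra.
Qed.

Lemma H01 a b : 0 < b -> partial 0 (partial 1 E) (mk3 a b 0) =
  Derive g (a / b) - a / b * Derive (Derive g) (a / b).
Proof.
  intro Hb. change (partial 0 (partial 1 E) (mk3 a b 0)) with
    (Derive (fun s => partial 1 E (mk3 (a+s) b 0)) 0).
  rewrite (Derive_ext _ (fun s => 2 * b * g ((a+s)/b) - (a+s) * Derive g ((a+s)/b)))
    by (intro; apply PE1; auto).
  apply is_derive_unique. auto_derive. sc. etaD.
  unfold Rdiv. rewrite Rplus_0_r. field. lra.
Qed.

Lemma H10 a b : 0 < b -> partial 1 (partial 0 E) (mk3 a b 0) =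
  Derive g (a / b) - a / b * Derive (Derive g) (a / b).
Proof.
  intro Hb. change (partial 1 (partial 0 E) (mk3 a b 0)) with
    (Derive (fun s => partial 0 E (mk3 a (b+s) 0)) 0).
  rewrite (Derive_ext_loc _ (fun s => (b+s) * Derive g (a/(b+s)))).
  2:{ apply (loc_of 0 b); auto. intros y Hy. apply PE0.
      rewrite Rminus_0_r in Hy. apply Rabs_def2 in Hy. lra. }
  apply is_derive_unique. auto_derive. sc. etaD.
  unfold Rdiv. rewrite Rplus_0_r. field. lra.
Qed.

Lemma H11 a b : 0 < b -> partial 1 (partial 1 E) (mk3 a b 0) =
  2 * g (a / b) - 2 * (a / b) * Derive g (a / b) + (a / b)^2 * Derive (Derive g) (a / b).
Proof.
  intro Hb. change (partial 1 (partial 1 E) (mk3 a b 0)) with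
    (Derive (fun s => partial 1 E (mk3 a (b+s) 0)) 0).
  rewrite (Derive_ext_loc _ (fun s => 2 * (b+s) * g (a/(b+s)) - a * Derive g (a/(b+s)))).
  2:{ apply (loc_of 0 b); auto. intros y Hy. apply PE1.
      rewrite Rminus_0_r in Hy. apply Rabs_def2 in Hy. lra. }
  apply is_derive_unique. auto_derive. sc. etaD.
  unfold Rdiv. rewrite Rplus_0_r. field. lra.
Qed.

Lemma H22 a b : 0 < b -> partial 2 (partial 2 E) (mk3 a b 0) =
  2 * g (a / b) - a / b * Derive g (a / b).
Proof.
  intro Hb. change (partial 2 (partial 2 E) (mk3 a b 0)) with
    (Derive (fun s => partial 2 E (mk3 a b (0 + s))) 0).
  rewrite (Derive_ext _ (fun s => (0+s) * (2 * g (a / sqrt (b^2 + (0+s)^2)) -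
     a / sqrt (b^2 + (0+s)^2) * Derive g (a / sqrt (b^2 + (0+s)^2)))))
    by (intro; apply PE2; auto).
  apply is_derive_unique. auto_derive.
  { rewrite !Rplus_0_l. repeat split; try nra; try apply g0; try apply g1;
    intro Hs; apply sqrt_eq_0 in Hs; nra. }
  etaD. rewrite !Rplus_0_l, !Rmult_0_l, Rplus_0_r.
  replace (b * (b * 1) + 0) with (b * b) by ring. rewrite sqrt_square by lra.
  unfold Rdiv. ring.
Qed.
End Hess.
Lemma hess_e1 E x : hess E x (mk3 1 0 0) (mk3 1 0 0) = partial 0 (partial 0 E) x.
Proof. unfold hess, sum3. cbv [coord Defs.c1 Defs.c2 Defs.c3 mk3 fst snd]. ring. Qed.
Lemma hess_e3 E x : hess E x (mk3 0 0 1) (mk3 0 0 1) = partial 2 (partial 2 E) x.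
Proof. unfold hess, sum3. cbv [coord Defs.c1 Defs.c2 Defs.c3 mk3 fst snd]. ring. Qed.
Lemma hess_pl E x v0 v1 : hess E x (mk3 v0 v1 0) (mk3 v0 v1 0) =
  partial 0 (partial 0 E) x * v0 * v0 + partial 0 (partial 1 E) x * v0 * v1 +
  partial 1 (partial 0 E) x * v1 * v0 + partial 1 (partial 1 E) x * v1 * v1.
Proof. unfold hess, sum3. cbv [coord Defs.c1 Defs.c2 Defs.c3 mk3 fst snd]. ring. Qed.
Lemma hess_ax3 E x c : hess E x (mk3 0 0 c) (mk3 0 0 c) = partial 2 (partial 2 E) x * c * c.
Proof. unfold hess, sum3. cbv [coord Defs.c1 Defs.c2 Defs.c3 mk3 fst snd]. ring. Qed.
Lemma dmap_e1 P x : dmap P x (mk3 1 0 0) =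
  mk3 (partial 0 (fun z => coord 0 (P z)) x) (partial 0 (fun z => coord 1 (P z)) x)
      (partial 0 (fun z => coord 2 (P z)) x).
Proof. unfold dmap, sum3. cbv [coord Defs.c1 Defs.c2 Defs.c3 mk3 fst snd]. f_equal; [f_equal|]; ring. Qed.
Lemma dmap_e3 P x : dmap P x (mk3 0 0 1) =
  mk3 (partial 2 (fun z => coord 0 (P z)) x) (partial 2 (fun z => coord 1 (P z)) x)
      (partial 2 (fun z => coord 2 (P z)) x).
Proof. unfold dmap, sum3. cbv [coord Defs.c1 Defs.c2 Defs.c3 mk3 fst snd]. f_equal; [f_equal|]; ring. Qed.

Lemma E_hom F l x : minkowski_norm F -> 0 < l -> Efun F (scal3 l x) = l^2 * Efun F x.
Proof. intros (_&_&_&_&Hh&_) Hl. unfold Efun. rewrite Hh by auto. ring. Qed.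

Lemma E_pos F x : minkowski_norm F -> nonzero3 x -> 0 < Efun F x.
Proof. intros (_&_&_&Hp&_&_) Hx. unfold Efun. specialize (Hp x Hx). nra. Qed.

Lemma mink_HE3 F : minkowski_norm F -> O2_invariant F -> forall a b c, 0 < b ->
  Efun F (mk3 a b c) = (b^2 + c^2) * Efun F (mk3 (a / sqrt (b^2 + c^2)) 1 0).
Proof.
  intros HF HO a b c Hb.
  assert (Hq : 0 < b^2 + c^2) by nra.
  assert (Hr := sqrt_sqrt (b^2 + c^2) (Rlt_le _ _ Hq)).
  assert (Hrp := sqrt_lt_R0 _ Hq).
  set (r := sqrt (b^2+c^2)) in *.
  assert (H1 : Efun F (mk3 a b c) = Efun F (mk3 a r 0)).
  { unfold Efun. rewrite <- (HO (b/r) (-c/r) (c/r) (b/r) a r 0).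
    - do 3 f_equal. unfold mk3. f_equal; [f_equal|]; field; lra.
    - replace ((b/r)^2 + (c/r)^2) with ((b^2+c^2)/(r*r)) by (field; lra). rewrite Hr. field. lra.
    - replace ((-c/r)^2 + (b/r)^2) with ((b^2+c^2)/(r*r)) by (field; lra). rewrite Hr. field. lra.
    - field. lra. }
  rewrite H1.
  replace (mk3 a r 0) with (scal3 r (mk3 (a / r) 1 0)).
  - rewrite E_hom by auto. rewrite <- Hr. ring.
  - unfold scal3, mk3, Defs.c1, Defs.c2, Defs.c3. simpl. f_equal; [f_equal|]; field; lra.
Qed.

Lemma cont_eps (f : R -> R) x : continuous f x -> forall eps, 0 < eps ->
  exists d, 0 < d /\ forall y, Rabs (y - x) < d -> Rabs (f y - f x) < eps.
Proof.
  intros Hc eps He.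
  assert (H : locally (f x) (fun u => Rabs (u - f x) < eps)) by (apply (loc_of (f x) eps); auto).
  apply Hc in H. destruct H as [d Hd]. exists d. split. apply cond_pos.
  intros y Hy. apply Hd. exact Hy.
Qed.

Lemma loc_pi t : 0 < t < PI -> locally t (fun u => 0 < u < PI).
Proof.
  intro Ht. apply (loc_of t (Rmin t (PI - t))). apply Rmin_glb_lt; lra.
  intros y Hy. apply Rabs_def2 in Hy. destruct Hy as [H1 H2].
  assert (Rmin t (PI - t) <= t) by apply Rmin_l.
  assert (Rmin t (PI - t) <= PI - t) by apply Rmin_r. lra.
Qed.

Section Prof.
Variables (p g : R -> R).
Hypothesis Hg : C3 g.
Hypothesis Hp : forall t, 0 < t < PI -> p t = sin t ^ 2 * g (cos t / sin t).
Let g0 z : ex_derive g z := proj1 (Hg z).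
Let g1 z : ex_derive (Derive g) z := proj1 (proj2 (Hg z)).
Let g2 z : ex_derive (Derive (Derive g)) z := proj2 (proj2 (Hg z)).

Lemma pD1 t : 0 < t < PI ->
  Derive p t = 2 * sin t * cos t * g (cos t / sin t) - Derive g (cos t / sin t).
Proof.
  intro Ht. assert (Hs := sin_gt_0 t (proj1 Ht) (proj2 Ht)).
  rewrite (Derive_ext_loc _ (fun u => sin u ^ 2 * g (cos u / sin u))).
  2:{ generalize (loc_pi t Ht). apply filter_imp. intros u Hu. apply Hp; auto. }
  replace (Derive g (cos t / sin t)) with ((sin t ^2 + cos t ^ 2) * Derive g (cos t / sin t)).
  2:{ assert (H := sin2_cos2 t). unfold Rsqr in H.
       assert (H2 : sin t ^ 2 + cos t ^ 2 = 1) by (rewrite <- H; ring). rewrite H2. ring. }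
  apply is_derive_unique. auto_derive.
  { repeat split; try apply g0; lra. }
  etaD. unfold Rdiv. field. lra.
Qed.

Lemma pD2 t : 0 < t < PI ->
  Derive (Derive p) t = 2 * (cos t ^ 2 - sin t ^ 2) * g (cos t / sin t)
     - 2 * (cos t / sin t) * Derive g (cos t / sin t)
     + Derive (Derive g) (cos t / sin t) / sin t ^ 2.
Proof.
  intro Ht. assert (Hs := sin_gt_0 t (proj1 Ht) (proj2 Ht)).
  rewrite (Derive_ext_loc _ (fun u => 2 * sin u * cos u * g (cos u / sin u) - Derive g (cos u / sin u))).
  2:{ generalize (loc_pi t Ht). apply filter_imp. intros u Hu. apply pD1; auto. }
  assert (H := sin2_cos2 t). unfold Rsqr in H.
  transitivity (2 * (cos t ^ 2 - sin t ^ 2) * g (cos t / sin t)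
     - 2 * (cos t / sin t) * (sin t * sin t + cos t * cos t) * Derive g (cos t / sin t)
     + (sin t * sin t + cos t * cos t) * Derive (Derive g) (cos t / sin t) / sin t ^ 2).
  2:{ rewrite H. rewrite !Rmult_1_r, !Rmult_1_l. reflexivity. }
  apply is_derive_unique. auto_derive.
  { repeat split; try apply g0; try apply g1; lra. }
  etaD. unfold Rdiv. field. lra.
Qed.

Lemma pD3 t : 0 < t < PI -> ex_derive (Derive (Derive p)) t.
Proof.
  intro Ht. assert (Hs := sin_gt_0 t (proj1 Ht) (proj2 Ht)).
  apply (ex_derive_ext_loc (fun u => 2 * (cos u ^ 2 - sin u ^ 2) * g (cos u / sin u)
     - 2 * (cos u / sin u) * Derive g (cos u / sin u)
     + Derive (Derive g) (cos u / sin u) / sin u ^ 2)).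
  { generalize (loc_pi t Ht). apply filter_imp. intros u Hu. symmetry. apply pD2; auto. }
  auto_derive. repeat split; try apply g0; try apply g1; try apply g2; try lra.
  intro H0. apply (pow_nonzero (sin t) 2) in H0; lra.
Qed.

Lemma pD0 t : 0 < t < PI -> ex_derive p t /\ ex_derive (Derive p) t.
Proof.
  intro Ht. assert (Hs := sin_gt_0 t (proj1 Ht) (proj2 Ht)). split.
  - apply (ex_derive_ext_loc (fun u => sin u ^ 2 * g (cos u / sin u))).
    { generalize (loc_pi t Ht). apply filter_imp. intros u Hu. symmetry. apply Hp; auto. }
    auto_derive. repeat split; try apply g0; lra.
  - apply (ex_derive_ext_loc (fun u => 2 * sin u * cos u * g (cos u / sin u) - Derive g (cos u / sin u))).
    { generalize (loc_pi t Ht). apply filter_imp. intros u Hu. symmetry. apply pD1; auto. }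
    auto_derive. repeat split; try apply g0; try apply g1; lra.
Qed.
End Prof.

Lemma prof_g F t : minkowski_norm F -> 0 < t < PI ->
  prof F t = sin t ^ 2 * Efun F (mk3 (cos t / sin t) 1 0).
Proof.
  intros HF Ht. assert (Hs := sin_gt_0 t (proj1 Ht) (proj2 Ht)).
  unfold prof. rewrite <- E_hom by auto. f_equal.
  unfold sph, scal3, mk3, Defs.c1, Defs.c2, Defs.c3. simpl. rewrite cos_0, sin_0.
  f_equal; [f_equal|]; field; lra.
Qed.

Definition Tm (w : R) := PI / 2 - atan w.

Lemma sqrt1p_pos w : 0 < sqrt (1 + w^2).
Proof. apply sqrt_lt_R0. nra. Qed.

Lemma sqrt1p_sq w : sqrt (1 + w^2) * sqrt (1 + w^2) = 1 + w^2.
Proof. apply sqrt_sqrt. nra. Qed.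

Lemma Tm_bound w : 0 < Tm w < PI.
Proof. unfold Tm. assert (H := atan_bound w). split; lra. Qed.

Lemma cos_Tm w : cos (Tm w) = w / sqrt (1 + w^2).
Proof. unfold Tm. rewrite cos_shift, sin_atan. unfold Rsqr. replace (w*w) with (w^2) by ring. reflexivity. Qed.

Lemma sin_Tm w : sin (Tm w) = 1 / sqrt (1 + w^2).
Proof. unfold Tm. rewrite sin_shift, cos_atan. unfold Rsqr. replace (w*w) with (w^2) by ring. reflexivity. Qed.

Lemma cos_atan' s : cos (atan s) = 1 / sqrt (1 + s^2).
Proof. rewrite cos_atan. unfold Rsqr. replace (s*s) with (s^2) by ring. reflexivity. Qed.
Lemma sin_atan' s : sin (atan s) = s / sqrt (1 + s^2).
Proof. rewrite sin_atan. unfold Rsqr. replace (s*s) with (s^2) by ring. reflexivity. Qed.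

Lemma cot_Tm w : cos (Tm w) / sin (Tm w) = w.
Proof. rewrite cos_Tm, sin_Tm. assert (H := sqrt1p_pos w). field. lra. Qed.

Lemma Tm_cot t : 0 < t < PI -> Tm (cos t / sin t) = t.
Proof.
  intro Ht. unfold Tm.
  replace (cos t / sin t) with (tan (PI / 2 - t)).
  - rewrite atan_tan. ring. split; lra.
  - unfold tan. rewrite sin_shift, cos_shift. reflexivity.
Qed.

Lemma sph_rep z s : sph (sqrt (1 + s^2) * sqrt (1 + (z / sqrt (1 + s^2))^2))
   (Tm (z / sqrt (1 + s^2))) (atan s) = mk3 z 1 s.
Proof.
  assert (Hl := sqrt1p_pos s). set (w := z / sqrt (1 + s^2)).
  assert (Hw := sqrt1p_pos w).
  unfold sph. rewrite cos_Tm, sin_Tm, cos_atan', sin_atan'.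
  unfold mk3. f_equal; [f_equal|].
  - transitivity (sqrt (1 + s^2) * w). field. lra. unfold w. field. lra.
  - field. lra.
  - field. lra.
Qed.

Section PhiRep.
Variables (U : R3 -> Prop) (Phi : R3 -> R3) (f h theta : R -> R).
Hypothesis Hform : forall r t ph, 0 < r -> 0 < t < PI -> U (sph r t ph) ->
     Phi (sph r t ph) = sph (sqrt (f t) / sqrt (h (theta t)) * r) (theta t) ph.

Definition Kq w := sqrt (f (Tm w)) / sqrt (h (theta (Tm w))) * sqrt (1 + w^2).
Definition Nf w := Kq w * cos (theta (Tm w)).
Definition Mf w := Kq w * sin (theta (Tm w)).

Lemma Phi_rep z s : U (mk3 z 1 s) ->
  Phi (mk3 z 1 s) = mk3 (sqrt (1 + s^2) * Nf (z / sqrt (1 + s^2)))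
     (Mf (z / sqrt (1 + s^2))) (s * Mf (z / sqrt (1 + s^2))).
Proof.
  intro HU. assert (Hl := sqrt1p_pos s). set (w := z / sqrt (1 + s^2)).
  assert (Hw := sqrt1p_pos w).
  rewrite <- (sph_rep z s) in HU |- *. fold w in HU |- *.
  rewrite Hform; auto. 2: apply Rmult_lt_0_compat; auto. 2: apply Tm_bound.
  unfold sph, Nf, Mf, Kq. rewrite cos_atan', sin_atan'.
  set (K := sqrt (f (Tm w)) / sqrt (h (theta (Tm w)))).
  unfold mk3. f_equal; [f_equal|]; field; lra.
Qed.

Lemma Phi_rep0 z : U (mk3 z 1 0) -> Phi (mk3 z 1 0) = mk3 (Nf z) (Mf z) 0.
Proof.
  intro HU. rewrite Phi_rep by auto.
  replace (1 + 0^2) with 1 by ring. rewrite sqrt_1.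
  replace (z / 1) with z by field. rewrite Rmult_1_l, Rmult_0_l. reflexivity.
Qed.
End PhiRep.

Definition gF (F : R3 -> R) (z : R) := Efun F (mk3 z 1 0).
Definition Zf (theta : R -> R) (w : R) := cos (theta (Tm w)) / sin (theta (Tm w)).

Lemma prof_pos F t : minkowski_norm F -> 0 < prof F t.
Proof.
  intro HF. apply E_pos; auto. unfold nonzero3, sph, mk3, zero3. intro H.
  injection H. intros Hc Hb Ha. assert (H2 := sin2_cos2 t). unfold Rsqr in H2.
  rewrite cos_0 in Hb. nra.
Qed.
Lemma alg G0 G1 G2 z Z Z1 a A B : Z <> 0 -> G0 <> 0 -> Z1 <> 0 ->
  z * G1 = Z * A -> G1 = 2 * a * G0 + A * Z1 ->
  G1 - z * G2 = 2 * a * (2 * G0 - z * G1) + Z1 * A - Z * Z1 * B ->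
  G2 = Z1^2 * B + 2 * a * Z1 * A + 2 * a^2 * G0 ->
  (z * Z1 - Z) * (G1 * (2 * G0 - z * G1) * Z1 - Z * (2 * G0 * G2 - G1^2)) = 0.
Proof.
  intros hZ hG hZ1 h2 h1 h4 h5.
  assert (HA : A = z * G1 / Z) by (rewrite h2; field; auto).
  assert (Ha : a = (G1 - A * Z1) / (2 * G0)) by (rewrite h1; field; auto).
  assert (HB : B = (G2 - 2 * a * Z1 * A - 2 * a^2 * G0) / Z1^2) by (rewrite h5; field; auto).
  assert (Hiv : (G1 - z * G2) - (2 * a * (2 * G0 - z * G1) + Z1 * A - Z * Z1 * B) = 0) by lra.
  transitivity (2 * G0 * (Z * Z1 * ((G1 - z * G2) - (2 * a * (2 * G0 - z * G1) + Z1 * A - Z * Z1 * B)))).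
  - rewrite HB, Ha, HA. field. auto.
  - rewrite Hiv. ring.
Qed.

Lemma div_eq0 a b : b <> 0 -> (a / b = 0 <-> a = 0).
Proof.
  intro Hb. split; intro H.
  - apply (Rmult_eq_reg_r (/ b)). rewrite Rmult_0_l. exact H. apply Rinv_neq_0_compat; auto.
  - rewrite H. unfold Rdiv. ring.
Qed.

Lemma one_plus_cot s c : 0 < s -> s^2 + c^2 = 1 -> 1 + (c/s)^2 = 1 / s^2.
Proof. intros Hs Hsc. transitivity ((s^2 + c^2) / s^2). field. lra. rewrite Hsc. reflexivity. Qed.

Lemma T1 s c S C p : 0 < s -> 0 < S -> s^2 + c^2 = 1 -> c <> 0 ->
  (p = C * S / (c * s) <->
   (c / s) * (p / ((1 + (c/s)^2) * S^2)) - C / S = 0).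
Proof.
  intros Hs HS Hsc Hc. rewrite one_plus_cot by auto.
  replace ((c / s) * (p / ((1 / s^2) * S^2)) - C / S) with ((c * s * p - C * S) / S^2)
    by (field; lra).
  rewrite div_eq0 by (apply pow_nonzero; lra).
  split; intro H.
  - rewrite H. field. lra.
  - assert (H' : C * S = c * s * p) by lra. rewrite H'. field. lra.
Qed.

Lemma T2 s c S C p G0 G1 G2 : 0 < s -> 0 < S -> s^2 + c^2 = 1 ->
  G1 <> 0 -> 2 * G0 - (c/s) * G1 <> 0 ->
  let f0 := s^2 * G0 in
  let f1 := 2 * s * c * G0 - G1 in
  let f2 := 2 * (c^2 - s^2) * G0 - 2 * (c / s) * G1 + G2 / s^2 in
  (p = (- 2 * f0 * f2 + f1 ^ 2 - 4 * f0 ^ 2) * C * S / ((c * f1 + 2 * s * f0) * (s * f1 - 2 * c * f0))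
   <->
   G1 * (2 * G0 - (c/s) * G1) * (p / ((1 + (c/s)^2) * S^2)) - C / S * (2 * G0 * G2 - G1^2) = 0).
Proof.
  intros Hs HS Hsc H1 H2 f0 f1 f2.
  assert (H2' : 2 * G0 * s - c * G1 <> 0).
  { intro E. apply H2. replace (2 * G0 - (c/s) * G1) with ((2 * G0 * s - c * G1) / s) by (field; lra).
    rewrite E. field. lra. }
  assert (HN : - 2 * f0 * f2 + f1 ^ 2 - 4 * f0 ^ 2 = G1^2 - 2 * G0 * G2)
    by (unfold f0, f1, f2; field; lra).
  assert (HD1 : c * f1 + 2 * s * f0 = s * (2 * G0 - (c/s) * G1)).
  { transitivity (2 * s * G0 * (s^2 + c^2) - c * G1). unfold f0, f1; ring.
    rewrite Hsc. field. lra. }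
  assert (HD2 : s * f1 - 2 * c * f0 = - s * G1) by (unfold f0, f1; ring).
  rewrite HN, HD1, HD2, one_plus_cot by auto.
  replace (G1 * (2 * G0 - (c/s) * G1) * (p / ((1 / s^2) * S^2)) - C / S * (2 * G0 * G2 - G1^2))
    with ((G1 * (2 * G0 - (c/s) * G1) * s^2 * p - C * S * (2 * G0 * G2 - G1^2)) / S^2)
    by (field; lra).
  rewrite div_eq0 by (apply pow_nonzero; lra).
  split; intro H.
  - rewrite H. field. repeat split; auto; lra.
  - assert (H' : C * S * (2 * G0 * G2 - G1^2) = G1 * (2 * G0 - (c/s) * G1) * s^2 * p) by lra.
    replace ((G1^2 - 2 * G0 * G2) * C * S) with (- (C * S * (2 * G0 * G2 - G1^2))) by ring.
    rewrite H'. field. repeat split; auto; lra.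
Qed.

Lemma T3 s c G0 G1 G2 : 0 < s -> s^2 + c^2 = 1 ->
  let f1 := 2 * s * c * G0 - G1 in
  let f2 := 2 * (c^2 - s^2) * G0 - 2 * (c / s) * G1 + G2 / s^2 in
  - c * s * f2 + (c^2 - s^2) * f1 = G1 - (c/s) * G2.
Proof.
  intros Hs Hsc f1 f2. unfold f1, f2.
  transitivity ((s^2 + c^2) * G1 - (c/s) * G2). field. lra.
  rewrite Hsc. ring.
Qed.

Lemma T4 z G0 G1 G2 Z Z1 : Z <> 0 -> G0 <> 0 ->
  z * Z1 - Z = 0 -> G1 * (2 * G0 - z * G1) * Z1 - Z * (2 * G0 * G2 - G1^2) = 0 ->
  G1 - z * G2 = 0.
Proof.
  intros HZ HG HW HV.
  assert (HZ1 : z * Z1 = Z) by lra.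
  assert (E : Z * (2 * G0 * (G1 - z * G2)) = 0).
  { transitivity (z * (G1 * (2 * G0 - z * G1) * Z1 - Z * (2 * G0 * G2 - G1^2)) + G1 * (2 * G0 - z * G1) * (Z - z * Z1)).
    ring. rewrite HV, HZ1. ring. }
  apply Rmult_integral in E. destruct E as [E|E]. contradiction.
  apply Rmult_integral in E. destruct E as [E|E]. lra. exact E.
Qed.

Lemma T5 s c G0 G1 : 0 < s -> s^2 + c^2 = 1 ->
  let f0 := s^2 * G0 in let f1 := 2 * s * c * G0 - G1 in
  (c * f1 + 2 * s * f0) * (s * f1 - 2 * c * f0) = - (s^2) * (2 * G0 - (c/s) * G1) * G1.
Proof.
  intros Hs Hsc f0 f1.
  assert (HD1 : c * f1 + 2 * s * f0 = s * (2 * G0 - (c/s) * G1)).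
  { transitivity (2 * s * G0 * (s^2 + c^2) - c * G1). unfold f0, f1; ring.
    rewrite Hsc. field. lra. }
  rewrite HD1. unfold f0, f1. field. lra.
Qed.

Ltac lamnorm := replace (1 + (0 + 0) * ((0 + 0) * 1)) with 1 by ring;
  rewrite ?sqrt_1, ?Rinv_1, ?Rmult_1_r.

Lemma LamA (phi : R -> R) z : ex_derive phi z ->
  is_derive (fun s => sqrt (1 + (0+s)^2) * phi (z / sqrt (1 + (0+s)^2))) 0 0.
Proof.
  intro H. auto_derive; lamnorm. repeat split; auto; lra. etaD. ring.
Qed.
Lemma LamB (phi : R -> R) z : ex_derive phi z ->
  is_derive (fun s => phi (z / sqrt (1 + (0+s)^2))) 0 0.
Proof.
  intro H. auto_derive; lamnorm. repeat split; auto; lra. etaD. ring.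
Qed.
Lemma LamC (phi : R -> R) z : ex_derive phi z ->
  is_derive (fun s => (0 + s) * phi (z / sqrt (1 + (0+s)^2))) 0 (phi z).
Proof.
  intro H. auto_derive; lamnorm. repeat split; auto; lra. etaD. ring.
Qed.

Lemma loc_in (z z0 eps : R) : Rabs (z - z0) < eps ->
  locally z (fun w => Rabs (w - z0) < eps).
Proof.
  intro H. apply (loc_of z (eps - Rabs (z - z0))). lra.
  intros y Hy. assert (Rabs (y - z0) <= Rabs (y - z) + Rabs (z - z0)).
  { replace (y - z0) with ((y - z) + (z - z0)) by ring. apply Rabs_triang. }
  lra.
Qed.

Lemma loc_in0 (z z0 eps : R) : Rabs (z - z0) < eps ->
  locally 0 (fun s => Rabs (z + s - z0) < eps).
Proof.
  intro H. apply (loc_of 0 (eps - Rabs (z - z0))). lra.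
  intros y Hy. rewrite Rminus_0_r in Hy.
  assert (Rabs (z + y - z0) <= Rabs (z - z0) + Rabs y).
  { replace (z + y - z0) with ((z - z0) + y) by ring. apply Rabs_triang. }
  lra.
Qed.

Section Core.
Variables (F1 F2 : R3 -> R) (U : R3 -> Prop) (Phi : R3 -> R3) (theta : R -> R) (z0 eps : R).
Hypothesis HF1 : minkowski_norm F1.
Hypothesis HF2 : minkowski_norm F2.
Hypothesis HO1 : O2_invariant F1.
Hypothesis HO2 : O2_invariant F2.
Hypothesis Hsm : smooth_map_on U Phi.
Hypothesis Hiso : forall x u v, U x ->
  hess_metric F1 x u v = hess_metric F2 (Phi x) (dmap Phi x u) (dmap Phi x v).
Hypothesis Hform : forall r t ph, 0 < r -> 0 < t < PI -> U (sph r t ph) ->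
  Phi (sph r t ph) = sph (sqrt (prof F1 t) / sqrt (prof F2 (theta t)) * r) (theta t) ph.
Hypothesis Heps : 0 < eps.
Hypothesis Hbox : forall z s, Rabs (z - z0) < eps -> Rabs s < eps -> U (mk3 z 1 s).
Hypothesis Hth : forall z, Rabs (z - z0) < eps ->
  0 < theta (Tm z) < PI /\ ex_derive theta (Tm z) /\ Derive theta (Tm z) <> 0.

Local Notation M := (Mf (prof F1) (prof F2) theta).
Local Notation N := (Nf (prof F1) (prof F2) theta).
Local Notation Z := (Zf theta).
Local Notation g1 := (gF F1).
Local Notation g2 := (gF F2).

Lemma C3_1 : C3 g1.
Proof. exact (g_C3 F1 (proj1 (proj2 (proj2 HF1)))). Qed.
Lemma C3_2 : C3 g2.
Proof. exact (g_C3 F2 (proj1 (proj2 (proj2 HF2)))). Qed.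
Lemma HE3_1 : forall a b c, 0 < b ->
  Efun F1 (mk3 a b c) = (b^2 + c^2) * g1 (a / sqrt (b^2 + c^2)).
Proof. exact (mink_HE3 F1 HF1 HO1). Qed.
Lemma HE3_2 : forall a b c, 0 < b ->
  Efun F2 (mk3 a b c) = (b^2 + c^2) * g2 (a / sqrt (b^2 + c^2)).
Proof. exact (mink_HE3 F2 HF2 HO2). Qed.

Lemma U0 z : Rabs (z - z0) < eps -> U (mk3 z 1 0).
Proof. intro H. apply Hbox; auto. rewrite Rabs_R0; auto. Qed.

Lemma L_M z : Rabs (z - z0) < eps -> 0 < M z.
Proof.
  intro H. destruct (Hth z H) as [[Ht1 Ht2] _].
  unfold Mf, Kq. apply Rmult_lt_0_compat; [apply Rmult_lt_0_compat|].
  - unfold Rdiv. apply Rmult_lt_0_compat. apply sqrt_lt_R0, prof_pos; auto.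
    apply Rinv_0_lt_compat, sqrt_lt_R0, prof_pos; auto.
  - apply sqrt1p_pos.
  - apply sin_gt_0; auto.
Qed.

Lemma L_NMZ z : Rabs (z - z0) < eps -> N z = M z * Z z.
Proof.
  intro H. destruct (Hth z H) as [[Ht1 Ht2] _].
  assert (Hs := sin_gt_0 _ Ht1 Ht2).
  unfold Nf, Mf, Zf. field. lra.
Qed.

Lemma L_P0 z : Rabs (z - z0) < eps -> Phi (mk3 z 1 0) = mk3 (N z) (M z) 0.
Proof. intro H. apply (Phi_rep0 U Phi); auto. apply U0; auto. Qed.

Lemma L_dcoord k z : (k < 3)%nat -> Rabs (z - z0) < eps ->
  ex_derive (fun s => coord k (Phi (mk3 (z + s) 1 0))) 0.
Proof.
  intros Hk H. apply (Ck_ex 0 U (fun x => coord k (Phi x)) 0 (mk3 z 1 0)); [lia| |apply U0; auto].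
  apply (Hsm k Hk).
Qed.

Lemma L_dMN z : Rabs (z - z0) < eps ->
  ex_derive M z /\ ex_derive N z /\
  partial 0 (fun x => coord 0 (Phi x)) (mk3 z 1 0) = Derive N z /\
  partial 0 (fun x => coord 1 (Phi x)) (mk3 z 1 0) = Derive M z /\
  partial 0 (fun x => coord 2 (Phi x)) (mk3 z 1 0) = 0.
Proof.
  intro H.
  assert (Hl : forall k, locally 0 (fun s => coord k (Phi (mk3 (z + s) 1 0)) =
     coord k (mk3 (N (z + s)) (M (z + s)) 0))).
  { intro k. generalize (loc_in0 z z0 eps H). apply filter_imp. intros s Hs.
    rewrite L_P0; auto. }
  assert (EM : ex_derive M z).
  { apply shift_ex. apply (ex_derive_ext_loc _ _ _ (Hl 1%nat)). apply L_dcoord; auto. }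
  assert (EN : ex_derive N z).
  { apply shift_ex. apply (ex_derive_ext_loc _ _ _ (Hl 0%nat)). apply L_dcoord; auto. }
  split; [auto|split; [auto|split; [|split]]].
  - change (partial 0 (fun x => coord 0 (Phi x)) (mk3 z 1 0)) with
      (Derive (fun s => coord 0 (Phi (mk3 (z + s) 1 0))) 0).
    etransitivity; [apply (Derive_ext_loc _ _ _ (Hl 0%nat))|]. apply (shift_Derive N z EN).
  - change (partial 0 (fun x => coord 1 (Phi x)) (mk3 z 1 0)) with
      (Derive (fun s => coord 1 (Phi (mk3 (z + s) 1 0))) 0).
    etransitivity; [apply (Derive_ext_loc _ _ _ (Hl 1%nat))|]. apply (shift_Derive M z EM).
  - change (partial 0 (fun x => coord 2 (Phi x)) (mk3 z 1 0)) with
      (Derive (fun s => coord 2 (Phi (mk3 (z + s) 1 0))) 0).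
    etransitivity; [apply (Derive_ext_loc _ _ _ (Hl 2%nat))|]. cbv [coord Defs.c3 mk3 snd]. apply Derive_const.
Qed.

Lemma L_e3 z : Rabs (z - z0) < eps ->
  partial 2 (fun x => coord 0 (Phi x)) (mk3 z 1 0) = 0 /\
  partial 2 (fun x => coord 1 (Phi x)) (mk3 z 1 0) = 0 /\
  partial 2 (fun x => coord 2 (Phi x)) (mk3 z 1 0) = M z.
Proof.
  intro H. destruct (L_dMN z H) as (EM & EN & _).
  assert (Hl : forall k, locally 0 (fun s => coord k (Phi (mk3 z 1 (0 + s))) =
     coord k (mk3 (sqrt (1 + (0+s)^2) * N (z / sqrt (1 + (0+s)^2)))
       (M (z / sqrt (1 + (0+s)^2))) ((0 + s) * M (z / sqrt (1 + (0+s)^2)))))).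
  { intro k. generalize (loc_in0 0 0 eps). intro L. apply filter_imp with (2 := L ltac:(rewrite Rminus_0_r, Rabs_R0; auto)).
    intros s Hs. rewrite (Phi_rep U Phi (prof F1) (prof F2) theta Hform); auto. apply Hbox; auto. rewrite Rplus_0_l, Rminus_0_r in Hs. rewrite Rplus_0_l. exact Hs. }
  split; [|split].
  - change (partial 2 (fun x => coord 0 (Phi x)) (mk3 z 1 0)) with
      (Derive (fun s => coord 0 (Phi (mk3 z 1 (0 + s)))) 0).
    etransitivity; [apply (Derive_ext_loc _ _ _ (Hl 0%nat))|]. apply is_derive_unique. apply LamA; auto.
  - change (partial 2 (fun x => coord 1 (Phi x)) (mk3 z 1 0)) with
      (Derive (fun s => coord 1 (Phi (mk3 z 1 (0 + s)))) 0).
    etransitivity; [apply (Derive_ext_loc _ _ _ (Hl 1%nat))|]. apply is_derive_unique. apply LamB; auto.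
  - change (partial 2 (fun x => coord 2 (Phi x)) (mk3 z 1 0)) with
      (Derive (fun s => coord 2 (Phi (mk3 z 1 (0 + s)))) 0).
    etransitivity; [apply (Derive_ext_loc _ _ _ (Hl 2%nat))|]. apply is_derive_unique. apply LamC; auto.
Qed.

Lemma L_dZ z : Rabs (z - z0) < eps ->
  is_derive Z z (Derive theta (Tm z) / ((1 + z^2) * sin (theta (Tm z))^2)).
Proof.
  intro H. destruct (Hth z H) as [[Ht1 Ht2] [Ed Hd]].
  assert (Hs := sin_gt_0 _ Ht1 Ht2).
  assert (Hsc := sin2_cos2 (theta (Tm z))). unfold Rsqr in Hsc.
  assert (E : is_derive Z z (Derive theta (Tm z) *
     (sin (theta (Tm z)) * sin (theta (Tm z)) + cos (theta (Tm z)) * cos (theta (Tm z))) /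
     ((1 + z^2) * sin (theta (Tm z))^2))).
  { unfold Zf. unfold Tm in *. auto_derive.
    all: replace (PI / 2 + - atan z) with (PI / 2 - atan z) by ring.
    { repeat split; auto; lra. }
    etaD. field. split. lra. nra. }
  rewrite Hsc, Rmult_1_r in E. exact E.
Qed.

Lemma g1_pos z : 0 < g1 z.
Proof. apply E_pos; auto. apply nz_line. Qed.

Lemma Rel0 z : Rabs (z - z0) < eps -> g1 z = M z ^ 2 * g2 (Z z).
Proof.
  intro H. destruct (Hth z H) as [[Ht1 Ht2] _].
  assert (Hs := sin_gt_0 _ Ht1 Ht2).
  assert (Hpf : prof F1 (Tm z) = (1 / sqrt (1 + z^2))^2 * g1 z).
  { rewrite prof_g by (auto; apply Tm_bound). rewrite cot_Tm, sin_Tm. reflexivity. }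
  assert (Hph : prof F2 (theta (Tm z)) = sin (theta (Tm z)) ^ 2 * g2 (Z z)).
  { rewrite prof_g by auto. reflexivity. }
  assert (P1 := prof_pos F1 (Tm z) HF1). assert (P2 := prof_pos F2 (theta (Tm z)) HF2).
  assert (Hq := sqrt1p_pos z).
  assert (G1 : g1 z = prof F1 (Tm z) * (sqrt (1 + z^2) * sqrt (1 + z^2))) by (rewrite Hpf; field; lra).
  assert (G2 : g2 (Z z) = prof F2 (theta (Tm z)) / sin (theta (Tm z)) ^ 2) by (rewrite Hph; field; lra).
  rewrite G1, G2. unfold Mf, Kq.
  set (pf := prof F1 (Tm z)) in *. set (ph := prof F2 (theta (Tm z))) in *.
  set (q := sqrt (1 + z^2)) in *. set (S := sin (theta (Tm z))) in *.
  assert (Sf := sqrt_sqrt pf (Rlt_le _ _ P1)). assert (Sh := sqrt_sqrt ph (Rlt_le _ _ P2)).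
  assert (Hf := sqrt_lt_R0 _ P1). assert (Hh := sqrt_lt_R0 _ P2).
  replace ((sqrt pf / sqrt ph * q * S) ^ 2) with
    ((sqrt pf * sqrt pf) / (sqrt ph * sqrt ph) * (q * q) * S^2) by (field; lra).
  rewrite Sf, Sh. field. split; lra.
Qed.

Lemma Rel1 z : Rabs (z - z0) < eps ->
  Derive (Derive g1) z =
  Derive (Derive g2) (Z z) * Derive N z * Derive N z
  + 2 * (Derive g2 (Z z) - Z z * Derive (Derive g2) (Z z)) * Derive N z * Derive M z
  + (2 * g2 (Z z) - 2 * Z z * Derive g2 (Z z) + Z z ^ 2 * Derive (Derive g2) (Z z))
      * Derive M z * Derive M z.
Proof.
  intro Hz. assert (HM := L_M z Hz). assert (HN := L_NMZ z Hz).
  assert (H := Hiso (mk3 z 1 0) (mk3 1 0 0) (mk3 1 0 0) (U0 z Hz)).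
  unfold hess_metric in H. rewrite hess_e1 in H.
  rewrite (H00 (Efun F1) g1 HE3_1 C3_1 z 1 Rlt_0_1) in H.
  rewrite dmap_e1 in H. destruct (L_dMN z Hz) as (_&_&h0&h1&h2).
  rewrite h0, h1, h2, L_P0, hess_pl in H by auto.
  rewrite (H00 (Efun F2) g2 HE3_2 C3_2 _ _ HM), (H01 (Efun F2) g2 HE3_2 C3_2 _ _ HM),
    (H10 (Efun F2) g2 HE3_2 C3_2 _ _ HM), (H11 (Efun F2) g2 HE3_2 C3_2 _ _ HM) in H.
  replace (N z / M z) with (Z z) in H by (rewrite HN; field; lra).
  replace (z / 1) with z in H by field.
  rewrite H. ring.
Qed.

Lemma Rel3 z : Rabs (z - z0) < eps ->
  2 * g1 z - z * Derive g1 z = (2 * g2 (Z z) - Z z * Derive g2 (Z z)) * (M z * M z).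
Proof.
  intro Hz. assert (HM := L_M z Hz). assert (HN := L_NMZ z Hz).
  assert (H := Hiso (mk3 z 1 0) (mk3 0 0 1) (mk3 0 0 1) (U0 z Hz)).
  unfold hess_metric in H. rewrite hess_e3 in H.
  rewrite (H22 (Efun F1) g1 HE3_1 C3_1 z 1 Rlt_0_1) in H.
  rewrite dmap_e3 in H. destruct (L_e3 z Hz) as (h0&h1&h2).
  rewrite h0, h1, h2, L_P0, hess_ax3 in H by auto.
  rewrite (H22 (Efun F2) g2 HE3_2 C3_2 _ _ HM) in H.
  replace (N z / M z) with (Z z) in H by (rewrite HN; field; lra).
  replace (z / 1) with z in H by field.
  rewrite H. ring.
Qed.

Lemma ex_Z z : Rabs (z - z0) < eps -> ex_derive Z z.
Proof. intro H. eexists. apply L_dZ; auto. Qed.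

Lemma Nd z : Rabs (z - z0) < eps -> Derive N z = Derive M z * Z z + M z * Derive Z z.
Proof.
  intro Hz. destruct (L_dMN z Hz) as (EM&_).
  assert (EZ := ex_Z z Hz).
  rewrite (Derive_ext_loc _ (fun w => M w * Z w)).
  2:{ generalize (loc_in z z0 eps Hz). apply filter_imp. intros w Hw. apply L_NMZ; auto. }
  apply is_derive_unique. auto_derive. auto. etaD. ring.
Qed.

Lemma Rel0d z : Rabs (z - z0) < eps ->
  Derive g1 z = 2 * M z * Derive M z * g2 (Z z) + M z ^ 2 * Derive g2 (Z z) * Derive Z z.
Proof.
  intro Hz. destruct (L_dMN z Hz) as (EM&_).
  assert (EZ := ex_Z z Hz). assert (C := C3_2).
  rewrite (Derive_ext_loc _ (fun w => M w ^ 2 * g2 (Z w))).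
  2:{ generalize (loc_in z z0 eps Hz). apply filter_imp. intros w Hw. apply Rel0; auto. }
  apply is_derive_unique. auto_derive. repeat split; auto; apply C. etaD. ring.
Qed.

Lemma Rel3d z : Rabs (z - z0) < eps ->
  Derive g1 z - z * Derive (Derive g1) z =
  (2 * Derive g2 (Z z) * Derive Z z - (Derive Z z * Derive g2 (Z z) +
     Z z * Derive (Derive g2) (Z z) * Derive Z z)) * (M z * M z)
  + (2 * g2 (Z z) - Z z * Derive g2 (Z z)) * (2 * M z * Derive M z).
Proof.
  intro Hz. destruct (L_dMN z Hz) as (EM&_).
  assert (EZ := ex_Z z Hz). assert (C := C3_2). assert (C1 := C3_1).
  transitivity (Derive (fun w => 2 * g1 w - w * Derive g1 w) z).
  { symmetry. apply is_derive_unique. auto_derive. repeat split; apply C1. etaD. ring. }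
  rewrite (Derive_ext_loc _ (fun w => (2 * g2 (Z w) - Z w * Derive g2 (Z w)) * (M w * M w))).
  2:{ generalize (loc_in z z0 eps Hz). apply filter_imp. intros w Hw. apply Rel3; auto. }
  apply is_derive_unique. auto_derive. repeat split; auto; apply C. etaD. ring.
Qed.

Lemma core_final z : Rabs (z - z0) < eps -> cos (theta (Tm z)) <> 0 ->
  (z * Derive Z z - Z z) *
  (Derive g1 z * (2 * g1 z - z * Derive g1 z) * Derive Z z -
   Z z * (2 * g1 z * Derive (Derive g1) z - Derive g1 z ^ 2)) = 0.
Proof.
  intros Hz Hc. destruct (Hth z Hz) as [[Ht1 Ht2] [_ Hd]].
  assert (Hs := sin_gt_0 _ Ht1 Ht2). assert (HM := L_M z Hz).
  assert (HZ : Z z <> 0).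
  { unfold Zf. intro H0. apply Hc. apply (Rmult_eq_reg_r (/ sin (theta (Tm z)))).
    rewrite Rmult_0_l. exact H0. apply Rinv_neq_0_compat. lra. }
  assert (HZ1 : Derive Z z <> 0).
  { rewrite (is_derive_unique _ _ _ (L_dZ z Hz)). unfold Rdiv.
    apply Rmult_integral_contrapositive. split; auto.
    apply Rinv_neq_0_compat. apply Rmult_integral_contrapositive. split. nra.
    apply pow_nonzero. lra. }
  assert (HG := g1_pos z).
  assert (r0 := Rel0 z Hz). assert (r1 := Rel1 z Hz). assert (r3 := Rel3 z Hz).
  assert (r0d := Rel0d z Hz). assert (r3d := Rel3d z Hz). assert (nd := Nd z Hz).
  apply (alg _ _ _ _ _ _ (Derive M z / M z) (M z ^ 2 * Derive g2 (Z z))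
     (M z ^ 2 * Derive (Derive g2) (Z z))); auto; try lra.
  - rewrite r0d, r0. field. lra.
  - rewrite r3d, r3. field. lra.
  - rewrite r1, nd, r0. field. lra.
Qed.
End Core.

Lemma nz_e1 : nonzero3 (mk3 1 0 0).
Proof. unfold nonzero3, mk3, zero3. intro H. injection H. lra. Qed.
Lemma nz_e3 : nonzero3 (mk3 0 0 1).
Proof. unfold nonzero3, mk3, zero3. intro H. injection H. lra. Qed.

Lemma ball3 (a b c a' b' c' : R) (eps : posreal) :
  Rabs (a' - a) < eps -> Rabs (b' - b) < eps -> Rabs (c' - c) < eps ->
  ball (mk3 a b c) eps (mk3 a' b' c').
Proof. intros H1 H2 H3. split; [split|]; assumption. Qed.

Lemma sph_Tm z : sph 1 (Tm z) 0 = scal3 (/ sqrt (1 + z^2)) (mk3 z 1 0).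
Proof.
  assert (H := sqrt1p_pos z). unfold sph. cbv [scal3 mk3 Defs.c1 Defs.c2 Defs.c3 fst snd].
  rewrite cos_Tm, sin_Tm, cos_0, sin_0. f_equal; [f_equal|]; field; lra.
Qed.

Lemma deriv_inj (g : R -> R) : C3 g -> (forall z, 0 < Derive (Derive g) z) ->
  forall a b, Derive g a = Derive g b -> a = b.
Proof.
  intros Hg Hp.
  assert (K : forall a b, a < b -> Derive g a = Derive g b -> False).
  { intros a b Hab E.
    destruct (MVT_gen (Derive g) a b (Derive (Derive g))) as [c [_ Hc]].
    - intros x _. apply Derive_correct. apply Hg.
    - intros x _. apply continuity_pt_filterlim. exact (ex_derive_continuous (Derive g) x (proj1 (proj2 (Hg x)))).
    - rewrite E in Hc. specialize (Hp c). nra. }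
  intros a b E. destruct (Rtotal_order a b) as [H|[H|H]]; auto.
  exfalso; apply (K a b); auto.
  exfalso; apply (K b a); auto.
Qed.

Lemma cos0_pi2 t : 0 < t < PI -> cos t = 0 -> t = PI / 2.
Proof.
  intros Ht Hc. rewrite <- (Tm_cot t Ht). rewrite Hc. unfold Rdiv. rewrite Rmult_0_l.
  unfold Tm. rewrite atan_0. lra.
Qed.

Lemma ex_cont (f : R -> R) x : ex_derive f x -> forall eps, 0 < eps ->
  exists d, 0 < d /\ forall y, Rabs (y - x) < d -> Rabs (f y - f x) < eps.
Proof. intros H. apply cont_eps. exact (ex_derive_continuous f x H). Qed.

Theorem lemma3p5 (F1 F2 : R3 -> R) (t' t0 : R) (U : R3 -> Prop)
  (Phi : R3 -> R3) (theta : R -> R) :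
  minkowski_norm F1 -> minkowski_norm F2 ->
  O2_invariant F1 -> O2_invariant F2 ->
  let f := prof F1 in
  let h := prof F2 in
  let f' := Derive f in
  let f'' := Derive (Derive f) in
  (0 < t' < PI /\ sin t' * f' t' - 2 * cos t' * f t' = 0) ->
  0 < t0 < PI -> t0 <> PI / 2 -> t0 <> t' ->
  - cos t0 * sin t0 * f'' t0 + (cos t0 ^ 2 - sin t0 ^ 2) * f' t0 <> 0 ->
  U (sph (/ sqrt (f t0)) t0 0) ->
  SO2_invariant_set U ->
  local_hessian_isometry F1 F2 U Phi ->
  (forall t, 0 < t < PI -> U (sph 1 t 0) ->
     0 < theta t < PI /\ (forall n, ex_derive_n theta n t) /\ Derive theta t <> 0) ->
  (forall r t ph, 0 < r -> 0 < t < PI -> U (sph r t ph) ->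
     Phi (sph r t ph) = sph (sqrt (f t) / sqrt (h (theta t)) * r) (theta t) ph) ->
  let P1 t := Derive theta t = cos (theta t) * sin (theta t) / (cos t * sin t) in
  let P2 t := Derive theta t =
      (- 2 * f t * f'' t + f' t ^ 2 - 4 * f t ^ 2) * cos (theta t) * sin (theta t)
      / ((cos t * f' t + 2 * sin t * f t) * (sin t * f' t - 2 * cos t * f t)) in
  (near_pt t0 P1 /\ ~ near_pt t0 P2) \/ (near_pt t0 P2 /\ ~ near_pt t0 P1).
Proof.
  intros HF1 HF2 HO1 HO2 f h f' f'' Ht' Ht0 Ht0pi Ht0t' Hnd HUy HSO Hiso Hth Hform P1 P2.
  subst f h f' f'' P1 P2.
  destruct Hiso as (V & Q & HUo & _ & HUc & _ & _ & _ & _ & _ & Hsm & _ & _ & Hisoeq).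
  assert (C1 : C3 (gF F1)) by exact (g_C3 F1 (proj1 (proj2 (proj2 HF1)))).
  assert (HE1 := mink_HE3 F1 HF1 HO1).
  assert (Hp1 : forall t, 0 < t < PI -> prof F1 t = sin t ^ 2 * (gF F1) (cos t / sin t))
    by (intros; apply prof_g; auto).
  assert (Hd1 : forall t, 0 < t < PI -> Derive (prof F1) t =
     2 * sin t * cos t * (gF F1) (cos t / sin t) - Derive (gF F1) (cos t / sin t))
    by (intros; apply (pD1 (prof F1) (gF F1) C1 Hp1); auto).
  assert (Hd2 : forall t, 0 < t < PI -> Derive (Derive (prof F1)) t =
     2 * (cos t ^ 2 - sin t ^ 2) * (gF F1) (cos t / sin t)
     - 2 * (cos t / sin t) * Derive (gF F1) (cos t / sin t)
     + Derive (Derive (gF F1)) (cos t / sin t) / sin t ^ 2)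
    by (intros; apply (pD2 (prof F1) (gF F1) C1 Hp1); auto).
  assert (Hpos2 : forall z, 0 < Derive (Derive (gF F1)) z).
  { intro z. destruct HF1 as (_&_&_&_&_&Hh).
    specialize (Hh (mk3 z 1 0) (mk3 1 0 0) (nz_line z) nz_e1).
    unfold hess_metric in Hh. rewrite hess_e1, (H00 (Efun F1) (gF F1) HE1 C1 z 1 Rlt_0_1) in Hh.
    replace (z / 1) with z in Hh by field. exact Hh. }
  assert (Hpos22 : forall z, 0 < 2 * (gF F1) z - z * Derive (gF F1) z).
  { intro z. destruct HF1 as (_&_&_&_&_&Hh).
    specialize (Hh (mk3 z 1 0) (mk3 0 0 1) (nz_line z) nz_e3).
    unfold hess_metric in Hh. rewrite hess_e3, (H22 (Efun F1) (gF F1) HE1 C1 z 1 Rlt_0_1) in Hh.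
    replace (z / 1) with z in Hh by field. exact Hh. }
  assert (Hg0 : forall z, 0 < (gF F1) z) by (intro z; unfold gF; apply E_pos; auto; apply nz_line).
  assert (Hsc : forall t, sin t ^ 2 + cos t ^ 2 = 1).
  { intro t. assert (H := sin2_cos2 t). unfold Rsqr in H. rewrite <- H. ring. }
  assert (Huniq : forall t, 0 < t < PI -> Derive (gF F1) (cos t / sin t) = 0 -> t = t').
  { intros t Ht Hz. destruct Ht' as [Ht'1 Ht'2].
    assert (Hs' := sin_gt_0 _ (proj1 Ht'1) (proj2 Ht'1)).
    rewrite Hd1, Hp1 in Ht'2 by auto.
    assert (E : Derive (gF F1) (cos t' / sin t') = 0) by nra.
    rewrite <- (Tm_cot t Ht), <- (Tm_cot t' Ht'1). f_equal.
    apply (deriv_inj (gF F1) C1 Hpos2). rewrite Hz, E. reflexivity. }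

  assert (Hs0 := sin_gt_0 _ (proj1 Ht0) (proj2 Ht0)).
  assert (Hc0 : cos t0 <> 0) by (intro E; apply Ht0pi; apply cos0_pi2; auto).
  assert (Hz0 : cos t0 / sin t0 <> 0) by (intro E; apply Hc0; apply (div_eq0 _ _ (Rgt_not_eq _ _ Hs0)); auto).
  assert (HG1z0 : Derive (gF F1) (cos t0 / sin t0) <> 0) by (intro E; apply Ht0t'; apply Huniq; auto).
  assert (Hf0 := prof_pos F1 t0 HF1).
  assert (HU0 : U (mk3 (cos t0 / sin t0) 1 0)).
  { destruct HUc as [_ Hcs].
    assert (Hq : sqrt (prof F1 t0) > 0) by (apply sqrt_lt_R0; auto).
    replace (mk3 (cos t0 / sin t0) 1 0) with
      (scal3 (sqrt (prof F1 t0) / sin t0) (sph (/ sqrt (prof F1 t0)) t0 0)).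
    apply Hcs; auto. apply Rdiv_lt_0_compat; auto.
    unfold sph. cbv [scal3 mk3 Defs.c1 Defs.c2 Defs.c3 fst snd]. rewrite cos_0, sin_0.
    f_equal; [f_equal|]; field; lra. }
  destruct (HUo _ HU0) as [eps Heps].
  assert (Heps0 : 0 < eps) by apply cond_pos.
  assert (Hbox : forall z s, Rabs (z - cos t0 / sin t0) < eps -> Rabs s < eps -> U (mk3 z 1 s)).
  { intros z s Hz Hs. apply Heps. apply ball3; auto.
    replace (1 - 1) with 0 by ring. rewrite Rabs_R0. auto. rewrite Rminus_0_r. auto. }
  assert (Hth' : forall z, Rabs (z - cos t0 / sin t0) < eps ->
     0 < theta (Tm z) < PI /\ ex_derive theta (Tm z) /\ Derive theta (Tm z) <> 0).
  { intros z Hz. assert (HU' : U (sph 1 (Tm z) 0)).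
    { rewrite sph_Tm. apply (proj2 HUc). apply Rinv_0_lt_compat, sqrt1p_pos.
      apply Hbox; auto. rewrite Rabs_R0; auto. }
    destruct (Hth (Tm z) (Tm_bound z) HU') as (A & B & C). split; auto. split; auto. exact (B 1%nat). }
  assert (Ht0z : Tm (cos t0 / sin t0) = t0) by (apply Tm_cot; auto).
  assert (Hz0in : Rabs (cos t0 / sin t0 - cos t0 / sin t0) < eps)
    by (replace (cos t0 / sin t0 - cos t0 / sin t0) with 0 by ring; rewrite Rabs_R0; auto).
  assert (HcT : cos (theta t0) <> 0).
  { intro E.
    assert (r0 : gF F1 (cos t0 / sin t0) = Mf (prof F1) (prof F2) theta (cos t0 / sin t0) ^ 2 *
        gF F2 (Zf theta (cos t0 / sin t0))) by (eapply (Rel0 F1 F2 theta _ eps); eauto).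
    assert (r3 : 2 * gF F1 (cos t0 / sin t0) - (cos t0 / sin t0) * Derive (gF F1) (cos t0 / sin t0) =
      (2 * gF F2 (Zf theta (cos t0 / sin t0)) - Zf theta (cos t0 / sin t0) *
         Derive (gF F2) (Zf theta (cos t0 / sin t0))) *
      (Mf (prof F1) (prof F2) theta (cos t0 / sin t0) * Mf (prof F1) (prof F2) theta (cos t0 / sin t0)))
      by (eapply (Rel3 F1 F2 U Phi theta _ eps); eauto).
    assert (EZ : Zf theta (cos t0 / sin t0) = 0) by (unfold Zf; rewrite Ht0z, E; unfold Rdiv; ring).
    rewrite EZ in r0, r3.
    assert (E2 : (cos t0 / sin t0) * Derive (gF F1) (cos t0 / sin t0) = 0) by nra.
    apply Rmult_integral in E2. destruct E2; contradiction. }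

  assert (HthU0 : U (sph 1 t0 0)).
  { rewrite <- Ht0z, sph_Tm. apply (proj2 HUc). apply Rinv_0_lt_compat, sqrt1p_pos. exact HU0. }
  destruct (Hth t0 Ht0 HthU0) as (Hth0 & Hthd & Hthne).
  assert (Eth : ex_derive theta t0) by exact (Hthd 1%nat).
  assert (Eth2 : ex_derive (Derive theta) t0) by exact (Hthd 2%nat).
  assert (HS0 := sin_gt_0 _ (proj1 Hth0) (proj2 Hth0)).
  destruct (ex_cont (fun t => cos t / sin t) t0 ltac:(auto_derive; lra) eps Heps0) as [d1 [Hn1p Hn1]].
  destruct (ex_cont (fun t => cos (theta t)) t0 ltac:(auto_derive; auto) (Rabs (cos (theta t0)))
     ltac:(apply Rabs_pos_lt; auto)) as [d2 [Hn2p Hn2]].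
  destruct (ex_cont theta t0 Eth (Rmin (theta t0) (PI - theta t0)) ltac:(apply Rmin_glb_lt; lra))
     as [d5 [Hn5p Hn5]].
  set (d3 := Rmin (Rmin t0 (PI - t0)) (Rmin (Rabs (t0 - t')) (Rabs (t0 - PI / 2)))).
  assert (Hd3p : 0 < d3).
  { unfold d3. apply Rmin_glb_lt; apply Rmin_glb_lt; try lra; apply Rabs_pos_lt; lra. }
  set (d := Rmin (Rmin d1 d2) (Rmin d3 d5)).
  assert (Hdp : 0 < d) by (unfold d; apply Rmin_glb_lt; apply Rmin_glb_lt; lra).
  assert (Hdd : forall t, Rabs (t - t0) < d ->
     Rabs (t - t0) < d1 /\ Rabs (t - t0) < d2 /\ Rabs (t - t0) < d5 /\
     0 < t < PI /\ t <> t' /\ t <> PI / 2).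
  { intros t Ht. unfold d, d3 in Ht.
    assert (A1 := Rmin_l (Rmin d1 d2) (Rmin (Rmin (Rmin t0 (PI - t0)) (Rmin (Rabs (t0 - t')) (Rabs (t0 - PI / 2)))) d5)).
    assert (A2 := Rmin_r (Rmin d1 d2) (Rmin (Rmin (Rmin t0 (PI - t0)) (Rmin (Rabs (t0 - t')) (Rabs (t0 - PI / 2)))) d5)).
    assert (B1 := Rmin_l d1 d2). assert (B2 := Rmin_r d1 d2).
    assert (C1' := Rmin_l (Rmin (Rmin t0 (PI - t0)) (Rmin (Rabs (t0 - t')) (Rabs (t0 - PI / 2)))) d5).
    assert (C2 := Rmin_r (Rmin (Rmin t0 (PI - t0)) (Rmin (Rabs (t0 - t')) (Rabs (t0 - PI / 2)))) d5).
    assert (D1 := Rmin_l (Rmin t0 (PI - t0)) (Rmin (Rabs (t0 - t')) (Rabs (t0 - PI / 2)))).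
    assert (D2 := Rmin_r (Rmin t0 (PI - t0)) (Rmin (Rabs (t0 - t')) (Rabs (t0 - PI / 2)))).
    assert (E1 := Rmin_l t0 (PI - t0)). assert (E2 := Rmin_r t0 (PI - t0)).
    assert (E3 := Rmin_l (Rabs (t0 - t')) (Rabs (t0 - PI / 2))).
    assert (E4 := Rmin_r (Rabs (t0 - t')) (Rabs (t0 - PI / 2))).
    assert (Ht2 := Ht). apply Rabs_def2 in Ht2.
    assert (L1 : Rabs (t - t0) < Rabs (t0 - t')) by lra.
    assert (L2 : Rabs (t - t0) < Rabs (t0 - PI / 2)) by lra.
    repeat split; try lra.
    - intro Et. rewrite Et, Rabs_minus_sym in L1. lra.
    - intro Et. rewrite Et, Rabs_minus_sym in L2. lra. }

  assert (HPP : forall t, Rabs (t - t0) < d ->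
     Derive theta t = cos (theta t) * sin (theta t) / (cos t * sin t) \/
     Derive theta t =
      (- 2 * prof F1 t * Derive (Derive (prof F1)) t + Derive (prof F1) t ^ 2 - 4 * prof F1 t ^ 2)
      * cos (theta t) * sin (theta t)
      / ((cos t * Derive (prof F1) t + 2 * sin t * prof F1 t) *
         (sin t * Derive (prof F1) t - 2 * cos t * prof F1 t))).
  { intros t Ht. destruct (Hdd t Ht) as (H1 & H2 & _ & Htp & Htt' & Htpi).
    assert (Hs := sin_gt_0 _ (proj1 Htp) (proj2 Htp)).
    assert (Hct : cos t <> 0) by (intro E; apply Htpi; apply cos0_pi2; auto).
    assert (Hz : Rabs (cos t / sin t - cos t0 / sin t0) < eps) by (apply (Hn1 t H1)).
    assert (HTm : Tm (cos t / sin t) = t) by (apply Tm_cot; auto).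
    assert (HcTt : cos (theta t) <> 0).
    { intro E. specialize (Hn2 t H2). cbv beta in Hn2. rewrite E, Rminus_0_l, Rabs_Ropp in Hn2. lra. }
    destruct (Hth' _ Hz) as [Hthz _]. rewrite HTm in Hthz.
    assert (HSt := sin_gt_0 _ (proj1 Hthz) (proj2 Hthz)).
    assert (core : (cos t / sin t * Derive (Zf theta) (cos t / sin t) - Zf theta (cos t / sin t)) *
       (Derive (gF F1) (cos t / sin t) * (2 * gF F1 (cos t / sin t) - cos t / sin t * Derive (gF F1) (cos t / sin t)) *
         Derive (Zf theta) (cos t / sin t) -
        Zf theta (cos t / sin t) * (2 * gF F1 (cos t / sin t) * Derive (Derive (gF F1)) (cos t / sin t) -
          Derive (gF F1) (cos t / sin t) ^ 2)) = 0).
    { eapply (core_final F1 F2 U Phi theta _ eps); eauto. rewrite HTm. auto. }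
    assert (dZ : is_derive (Zf theta) (cos t / sin t)
       (Derive theta (Tm (cos t / sin t)) / ((1 + (cos t / sin t)^2) * sin (theta (Tm (cos t / sin t)))^2)))
      by (eapply (L_dZ theta _ eps); eauto).
    rewrite (is_derive_unique _ _ _ dZ) in core. unfold Zf in core. rewrite HTm in core.
    apply Rmult_integral in core. destruct core as [W|W].
    - left. apply (proj2 (T1 (sin t) (cos t) (sin (theta t)) (cos (theta t)) (Derive theta t) Hs HSt (Hsc t) Hct)).
      exact W.
    - right. rewrite Hd2, Hd1, Hp1 by auto.
      assert (HG1 : Derive (gF F1) (cos t / sin t) <> 0) by (intro E; apply Htt'; apply Huniq; auto).
      assert (HG2 : 2 * gF F1 (cos t / sin t) - cos t / sin t * Derive (gF F1) (cos t / sin t) <> 0)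
        by (apply Rgt_not_eq; apply Hpos22).
      apply (proj2 (T2 (sin t) (cos t) (sin (theta t)) (cos (theta t)) (Derive theta t)
         (gF F1 (cos t / sin t)) (Derive (gF F1) (cos t / sin t)) (Derive (Derive (gF F1)) (cos t / sin t))
         Hs HSt (Hsc t) HG1 HG2)).
      exact W. }

  set (phi1 := fun t => Derive theta t - cos (theta t) * sin (theta t) / (cos t * sin t)).
  set (phi2 := fun t => Derive theta t -
      (- 2 * prof F1 t * Derive (Derive (prof F1)) t + Derive (prof F1) t ^ 2 - 4 * prof F1 t ^ 2)
      * cos (theta t) * sin (theta t)
      / ((cos t * Derive (prof F1) t + 2 * sin t * prof F1 t) *
         (sin t * Derive (prof F1) t - 2 * cos t * prof F1 t))).
  destruct (pD0 (prof F1) (gF F1) C1 Hp1 t0 Ht0) as [Ef0 Ef1].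
  assert (Ef2 := pD3 (prof F1) (gF F1) C1 Hp1 t0 Ht0).
  assert (Hden : (cos t0 * Derive (prof F1) t0 + 2 * sin t0 * prof F1 t0) *
         (sin t0 * Derive (prof F1) t0 - 2 * cos t0 * prof F1 t0) <> 0).
  { rewrite Hd1, Hp1 by auto.
    assert (E := T5 (sin t0) (cos t0) (gF F1 (cos t0 / sin t0)) (Derive (gF F1) (cos t0 / sin t0)) Hs0 (Hsc t0)).
    cbv zeta in E. rewrite E.
    assert (HG2 := Hpos22 (cos t0 / sin t0)).
    apply Rmult_integral_contrapositive. split; auto.
    apply Rmult_integral_contrapositive. split. apply Ropp_neq_0_compat; apply pow_nonzero; lra. lra. }
  assert (Ep1 : ex_derive phi1 t0).
  { unfold phi1. auto_derive. repeat split; auto. apply Rmult_integral_contrapositive; split; lra. }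
  assert (Ep2 : ex_derive phi2 t0).
  { unfold phi2. auto_derive. repeat split; auto. }
  assert (Hdiff : phi1 t0 <> phi2 t0).
  { intro E. unfold phi1, phi2 in E.
    set (p := cos (theta t0) * sin (theta t0) / (cos t0 * sin t0)).
    assert (W : cos t0 / sin t0 * (p / ((1 + (cos t0 / sin t0)^2) * sin (theta t0)^2)) -
        cos (theta t0) / sin (theta t0) = 0)
      by (apply (proj1 (T1 (sin t0) (cos t0) (sin (theta t0)) (cos (theta t0)) p Hs0 HS0 (Hsc t0) Hc0)); reflexivity).
    assert (E' : p = (- 2 * prof F1 t0 * Derive (Derive (prof F1)) t0 + Derive (prof F1) t0 ^ 2 - 4 * prof F1 t0 ^ 2)
      * cos (theta t0) * sin (theta t0)
      / ((cos t0 * Derive (prof F1) t0 + 2 * sin t0 * prof F1 t0) *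
         (sin t0 * Derive (prof F1) t0 - 2 * cos t0 * prof F1 t0))) by (unfold p; lra).
    rewrite Hd2, Hd1, Hp1 in E' by auto.
    assert (HG2 : 2 * gF F1 (cos t0 / sin t0) - cos t0 / sin t0 * Derive (gF F1) (cos t0 / sin t0) <> 0)
      by (apply Rgt_not_eq; apply Hpos22).
    assert (VV := proj1 (T2 (sin t0) (cos t0) (sin (theta t0)) (cos (theta t0)) p
         (gF F1 (cos t0 / sin t0)) (Derive (gF F1) (cos t0 / sin t0)) (Derive (Derive (gF F1)) (cos t0 / sin t0))
         Hs0 HS0 (Hsc t0) HG1z0 HG2) E').
    assert (HZ : cos (theta t0) / sin (theta t0) <> 0).
    { intro E0. apply HcT. apply (div_eq0 _ _ (Rgt_not_eq _ _ HS0)). exact E0. }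
    assert (G := T4 _ _ _ _ _ _ HZ (Rgt_not_eq _ _ (Hg0 (cos t0 / sin t0))) W VV).
    apply Hnd. rewrite Hd2, Hd1 by auto.
    assert (E3 := T3 (sin t0) (cos t0) (gF F1 (cos t0 / sin t0)) (Derive (gF F1) (cos t0 / sin t0))
       (Derive (Derive (gF F1)) (cos t0 / sin t0)) Hs0 (Hsc t0)).
    cbv zeta in E3. rewrite E3. exact G. }
  assert (HP1 : forall t, Derive theta t = cos (theta t) * sin (theta t) / (cos t * sin t) <-> phi1 t = 0)
    by (intro t; unfold phi1; split; intro; lra).
  assert (HP2 : forall t, Derive theta t =
      (- 2 * prof F1 t * Derive (Derive (prof F1)) t + Derive (prof F1) t ^ 2 - 4 * prof F1 t ^ 2)
      * cos (theta t) * sin (theta t)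
      / ((cos t * Derive (prof F1) t + 2 * sin t * prof F1 t) *
         (sin t * Derive (prof F1) t - 2 * cos t * prof F1 t)) <-> phi2 t = 0)
    by (intro t; unfold phi2; split; intro; lra).
  destruct (Req_dec (phi1 t0) 0) as [Z1|Z1].
  - left. assert (Z2 : phi2 t0 <> 0) by (intro; apply Hdiff; lra).
    destruct (ex_cont phi2 t0 Ep2 (Rabs (phi2 t0)) (Rabs_pos_lt _ Z2)) as [d4 [Hd4p Hd4]].
    split.
    + exists (Rmin d d4). split. apply Rmin_glb_lt; auto.
      intros t Ht. assert (A1 := Rmin_l d d4). assert (A2 := Rmin_r d d4).
      destruct (HPP t ltac:(lra)) as [P|P]; auto.
      exfalso. apply HP2 in P. specialize (Hd4 t ltac:(lra)). rewrite P, Rminus_0_l, Rabs_Ropp in Hd4. lra.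
    + intros [e [He H]]. apply Z2. apply HP2. apply H. rewrite Rminus_diag_eq, Rabs_R0 by auto. exact He.
  - right.
    destruct (ex_cont phi1 t0 Ep1 (Rabs (phi1 t0)) (Rabs_pos_lt _ Z1)) as [d4 [Hd4p Hd4]].
    split.
    + exists (Rmin d d4). split. apply Rmin_glb_lt; auto.
      intros t Ht. assert (A1 := Rmin_l d d4). assert (A2 := Rmin_r d d4).
      destruct (HPP t ltac:(lra)) as [P|P]; auto.
      exfalso. apply HP1 in P. specialize (Hd4 t ltac:(lra)). rewrite P, Rminus_0_l, Rabs_Ropp in Hd4. lra.
    + intros [e [He H]]. apply Z1. apply HP1. apply H. rewrite Rminus_diag_eq, Rabs_R0 by auto. exact He.
Qed.
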